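(* Let $P\subseteq\omega$ and let $p_0\ge p_1\ge p_2\ge\cdots$ be a sequence of $\mathbb C$-conditions with $\lim_s|p_s|=\infty$ which is 3-generic relative to $P$, and let $f=\bigcup_s\sigma^{p_s}:[\omega]^2\to 2$. Then $f\oplus P$ does not compute any set p-homogeneous for $f$.
   Context: $\mathbb C$ is the following notion of forcing. A condition is a triple $p=\langle\sigma^p,l^p,|p|\rangle$ where $|p|\in\omega$, $\sigma^p:[|p|]^2\to 2$, $l^p:|p|\to 2\times\omega$, and whenever $l^p(x)=\langle i,z\rangle$, $\sigma^p(x,y)$ is defined and $y\ge z$, then $\sigma^p(x,y)=i$. $q\le p$ if $|q|\ge|p|$, $\sigma^q\supseteq\sigma^p$, $l^q\supseteq l^p$. A descending sequence $(p_s)$ is 3-generic relative to $P$ if for every set $W$ of conditions that is $\Sigma^0_3$-definable in $P$, either some $p_s$ lies in $W$ or some $p_s$ has no extension in $W$. $f(x,y)$ means $f(\{x,y\})$ for $x<y$. $A\oplus B=\{2x:x\in A\}\cup\{2y+1:y\in B\}$. A set $H=H_L\oplus H_R$ with $H_L,H_R$ infinite is p-homogeneous for $f$ if $f(\{x,y\})$ is constant over $x\in H_L$, $y\in H_R$, $x\neq y$. *)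

(* Defs.v *)
From Stdlib Require Import Arith List Bool.
Import ListNotations.

Definition b2n (b : bool) : nat := if b then 1 else 0.

Inductive prog : Type :=
| PZero : prog
| PSucc : prog
| PProj : nat -> prog
| POracle : prog
| PComp : prog -> list prog -> prog
| PRec : prog -> prog -> prog
| PMu : prog -> prog.

Inductive eval (X : nat -> bool) : prog -> list nat -> nat -> Prop :=
| eZero args : eval X PZero args 0
| eSucc x args : eval X PSucc (x :: args) (S x)
| eProj i args : i < length args -> eval X (PProj i) args (nth i args 0)
| eOracle x args : eval X POracle (x :: args) (b2n (X x))
| eComp f gs args vs v :
    evals X gs args vs -> eval X f vs v -> eval X (PComp f gs) args v
| eRec0 f g args v : eval X f args v -> eval X (PRec f g) (0 :: args) v
| eRecS f g n args r v :
    eval X (PRec f g) (n :: args) r -> eval X g (n :: r :: args) v ->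
    eval X (PRec f g) (S n :: args) v
| eMu f args n :
    eval X f (n :: args) 0 ->
    (forall m, m < n -> exists k, eval X f (m :: args) (S k)) ->
    eval X (PMu f) args n
with evals (X : nat -> bool) : list prog -> list nat -> list nat -> Prop :=
| esNil args : evals X [] args []
| esCons g gs args v vs :
    eval X g args v -> evals X gs args vs -> evals X (g :: gs) args (v :: vs).

Definition computes (X H : nat -> bool) : Prop :=
  exists e : prog, forall n, eval X e [n] (b2n (H n)).

Definition cpair (a b : nat) : nat := (a + b) * (a + b + 1) / 2 + b.

(* Cantor enumeration of pairs (inverse of cpair). *)
Definition next_pair (ab : nat * nat) : nat * nat :=
  match ab with
  | (0, b) => (S b, 0)
  | (S a, b) => (a, S b)
  end.
Definition unpair (n : nat) : nat * nat := Nat.iter n next_pair (0, 0).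

Fixpoint lcode (l : list nat) : nat :=
  match l with
  | [] => 0
  | h :: t => S (cpair h (lcode t))
  end.

Definition join (A B : nat -> bool) : nat -> bool :=
  fun n => if Nat.even n then A (Nat.div2 n) else B (Nat.div2 n).

(* A condition: |p| = csz, sigma^p = csig (meaningful on x<y<|p|),
   l^p = clab (meaningful on x<|p|). *)
Record cond : Type := mkCond {
  csz : nat;
  csig : nat -> nat -> bool;
  clab : nat -> bool * nat }.

Definition valid (p : cond) : Prop :=
  forall x y, x < y -> y < csz p ->
    snd (clab p x) <= y -> csig p x y = fst (clab p x).

Definition ext (q p : cond) : Prop :=
  csz p <= csz q /\
  (forall x y, x < y -> y < csz p -> csig q x y = csig p x y) /\
  (forall x, x < csz p -> clab q x = clab p x).

Definition code (p : cond) : nat :=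
  lcode [csz p;
         lcode (flat_map (fun y => map (fun x => b2n (csig p x y)) (seq 0 y))
                         (seq 0 (csz p)));
         lcode (map (fun x => cpair (b2n (fst (clab p x))) (snd (clab p x)))
                    (seq 0 (csz p)))].

Definition sigma3_in (P : nat -> bool) (W : cond -> Prop) : Prop :=
  exists e : prog,
    (forall k a b d, exists v, eval P e [k; a; b; d] v) /\
    (forall p, valid p ->
       (W p <-> exists a, forall b, exists d, eval P e [code p; a; b; d] 0)).

Definition generic3 (P : nat -> bool) (ps : nat -> cond) : Prop :=
  forall W : cond -> Prop, sigma3_in P W ->
    (exists s, W (ps s)) \/
    (exists s, forall q, valid q -> ext q (ps s) -> ~ W q).

(* f is meaningful on x<y; fsym f gives f({x,y}). *)
Definition fsym (f : nat -> nat -> bool) (x y : nat) : bool :=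
  if x <? y then f x y else f y x.

(* f : [omega]^2 -> 2 as an oracle: the set of codes of pairs x<y with f = 1. *)
Definition foracle (f : nat -> nat -> bool) : nat -> bool :=
  fun n => let (x, y) := unpair n in (x <? y) && f x y.

Definition infinite (A : nat -> bool) : Prop :=
  forall N, exists n, N <= n /\ A n = true.

(* H = H_L (+) H_R with H_L x = H (2x), H_R y = H (2y+1). *)
Definition phomog (f : nat -> nat -> bool) (H : nat -> bool) : Prop :=
  infinite (fun x => H (2 * x)) /\ infinite (fun y => H (2 * y + 1)) /\
  exists c : bool, forall x y, H (2 * x) = true -> H (2 * y + 1) = true ->
    x <> y -> fsym f x y = c.

(* Main.v *)
Require Import Defs.
From Stdlib Require Import Arith List Lia.
Import ListNotations.

Definition tp (i : nat) : prog := PProj i.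
Definition tS (t : prog) : prog := PComp PSucc [t].
Fixpoint cst (c : nat) : prog := match c with 0 => PZero | S c' => tS (cst c') end.

Lemma ev_eq X p env v w : eval X p env v -> v = w -> eval X p env w.
Proof. intros H ->; exact H. Qed.

Lemma ev_proj X i env v : i < length env -> nth i env 0 = v -> eval X (tp i) env v.
Proof. intros H <-; constructor; auto. Qed.

Lemma ev_C1 X f t env a v : eval X t env a -> eval X f [a] v -> eval X (PComp f [t]) env v.
Proof. intros; eapply eComp; [apply esCons; [eassumption|apply esNil]|eassumption]. Qed.

Lemma ev_C2 X f t1 t2 env a b v : eval X t1 env a -> eval X t2 env b ->
  eval X f [a;b] v -> eval X (PComp f [t1;t2]) env v.
Proof. intros; eapply eComp; [apply esCons; [eassumption|apply esCons;[eassumption|apply esNil]]|eassumption]. Qed.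

Lemma ev_tS X t env a : eval X t env a -> eval X (tS t) env (S a).
Proof. intros; eapply ev_C1; [eassumption|constructor]. Qed.

Lemma ev_cst X env c : eval X (cst c) env c.
Proof. induction c; simpl; [constructor|apply ev_tS; auto]. Qed.

Fixpoint iterS (step : nat -> nat -> nat) (z : nat) (n : nat) : nat :=
  match n with 0 => z | S n' => step n' (iterS step z n') end.

Lemma ev_rec X f g args (h : nat -> nat) :
  eval X f args (h 0) -> (forall i, eval X g (i :: h i :: args) (h (S i))) ->
  forall n, eval X (PRec f g) (n :: args) (h n).
Proof. intros H0 HS; induction n; [constructor; auto| econstructor; eauto]. Qed.

Ltac evp := apply ev_proj; simpl; [lia | reflexivity].

Definition Add := PRec (tp 0) (tS (tp 1)).
Lemma ev_Add X x y : eval X Add [x;y] (x + y).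
Proof.
  apply (ev_rec X _ _ [y] (fun x => x + y)); [evp|].
  intros i; apply ev_tS; evp.
Qed.
Definition tadd t1 t2 := PComp Add [t1;t2].
Lemma ev_tadd X t1 t2 env a b : eval X t1 env a -> eval X t2 env b -> eval X (tadd t1 t2) env (a+b).
Proof. intros; eapply ev_C2; eauto; apply ev_Add. Qed.

Definition Pred := PRec PZero (tp 0).
Lemma ev_Pred X x : eval X Pred [x] (pred x).
Proof. apply (ev_rec X _ _ [] pred); [constructor|intros; evp]. Qed.
Definition tpred t := PComp Pred [t].
Lemma ev_tpred X t env a : eval X t env a -> eval X (tpred t) env (pred a).
Proof. intros; eapply ev_C1; eauto; apply ev_Pred. Qed.

Definition SubR := PRec (tp 0) (tpred (tp 1)).
Lemma ev_SubR X y x : eval X SubR [y;x] (x - y).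
Proof.
  apply (ev_rec X _ _ [x] (fun y => x - y)); [eapply ev_eq;[evp|lia]|].
  intros i; eapply ev_eq; [apply ev_tpred; evp|simpl; lia].
Qed.
Definition tsub t1 t2 := PComp SubR [t2;t1].
Lemma ev_tsub X t1 t2 env a b : eval X t1 env a -> eval X t2 env b -> eval X (tsub t1 t2) env (a-b).
Proof. intros; eapply ev_C2; eauto; apply ev_SubR. Qed.

Definition Mul := PRec PZero (tadd (tp 1) (tp 2)).
Lemma ev_Mul X x y : eval X Mul [x;y] (x * y).
Proof.
  apply (ev_rec X _ _ [y] (fun x => x * y)); [constructor|].
  intros i; eapply ev_eq; [apply ev_tadd; evp|simpl; lia].
Qed.
Definition tmul t1 t2 := PComp Mul [t1;t2].
Lemma ev_tmul X t1 t2 env a b : eval X t1 env a -> eval X t2 env b -> eval X (tmul t1 t2) env (a*b).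
Proof. intros; eapply ev_C2; eauto; apply ev_Mul. Qed.

Definition sgn (n : nat) := match n with 0 => 0 | _ => 1 end.
Definition nsgn (n : nat) := match n with 0 => 1 | _ => 0 end.
Definition Sg := PRec PZero (cst 1).
Lemma ev_Sg X x : eval X Sg [x] (sgn x).
Proof. apply (ev_rec X _ _ [] sgn); [constructor|intros; apply ev_cst]. Qed.
Definition tsg t := PComp Sg [t].
Lemma ev_tsg X t env a : eval X t env a -> eval X (tsg t) env (sgn a).
Proof. intros; eapply ev_C1; eauto; apply ev_Sg. Qed.
Definition Nsg := PRec (cst 1) PZero.
Lemma ev_Nsg X x : eval X Nsg [x] (nsgn x).
Proof. apply (ev_rec X _ _ [] nsgn); [apply ev_cst|intros; constructor]. Qed.
Definition tnsg t := PComp Nsg [t].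
Lemma ev_tnsg X t env a : eval X t env a -> eval X (tnsg t) env (nsgn a).
Proof. intros; eapply ev_C1; eauto; apply ev_Nsg. Qed.

Definition ite c a b := sgn c * a + nsgn c * b.
Definition tite tc ta tb := tadd (tmul (tsg tc) ta) (tmul (tnsg tc) tb).
Lemma ev_tite X tc ta tb env c a b : eval X tc env c -> eval X ta env a -> eval X tb env b ->
  eval X (tite tc ta tb) env (ite c a b).
Proof. intros; apply ev_tadd; apply ev_tmul; auto using ev_tsg, ev_tnsg. Qed.

Definition ltbn a b := sgn (b - a).
Definition tltb t1 t2 := tsg (tsub t2 t1).
Lemma ev_tltb X t1 t2 env a b : eval X t1 env a -> eval X t2 env b -> eval X (tltb t1 t2) env (ltbn a b).
Proof. intros; apply ev_tsg, ev_tsub; auto. Qed.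
Definition eqbn a b := nsgn (a - b) * nsgn (b - a).
Definition teqb t1 t2 := tmul (tnsg (tsub t1 t2)) (tnsg (tsub t2 t1)).
Lemma ev_teqb X t1 t2 env a b : eval X t1 env a -> eval X t2 env b -> eval X (teqb t1 t2) env (eqbn a b).
Proof. intros; apply ev_tmul; apply ev_tnsg, ev_tsub; auto. Qed.

Fixpoint parf (n : nat) := match n with 0 => 0 | S n' => nsgn (parf n') end.
Definition Par := PRec PZero (tnsg (tp 1)).
Lemma ev_Par X x : eval X Par [x] (parf x).
Proof. apply (ev_rec X _ _ [] parf); [constructor|intros; apply ev_tnsg; evp]. Qed.
Definition tpar t := PComp Par [t].
Lemma ev_tpar X t env a : eval X t env a -> eval X (tpar t) env (parf a).
Proof. intros; eapply ev_C1; eauto; apply ev_Par. Qed.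

Lemma parf_aux n : (Nat.even n = true /\ parf n = 0 /\ Nat.div2 (S n) = Nat.div2 n) \/
                   (Nat.even n = false /\ parf n = 1 /\ Nat.div2 (S n) = S (Nat.div2 n)).
Proof.
  induction n using (well_founded_induction lt_wf).
  destruct n as [|[|n]]; [left; auto|right; auto|].
  destruct (H n ltac:(lia)) as [[A [B C]]|[A [B C]]]; [left|right]; simpl; rewrite ?B; simpl;
  repeat split; auto; rewrite <- C; reflexivity.
Qed.

Definition Div2 := PRec PZero (tadd (tp 1) (tpar (tp 0))).
Lemma ev_Div2 X x : eval X Div2 [x] (Nat.div2 x).
Proof.
  apply (ev_rec X _ _ [] Nat.div2); [constructor|].
  intros i; eapply ev_eq; [apply ev_tadd; [evp|apply ev_tpar; evp]|].
  destruct (parf_aux i) as [[A [B C]]|[A [B C]]]; rewrite B, C; lia.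
Qed.
Definition tdiv2 t := PComp Div2 [t].
Lemma ev_tdiv2 X t env a : eval X t env a -> eval X (tdiv2 t) env (Nat.div2 a).
Proof. intros; eapply ev_C1; eauto; apply ev_Div2. Qed.

Fixpoint tri (s : nat) := match s with 0 => 0 | S s' => tri s' + S s' end.
Definition Tri := PRec PZero (tadd (tp 1) (tS (tp 0))).
Lemma ev_Tri X x : eval X Tri [x] (tri x).
Proof. apply (ev_rec X _ _ [] tri); [constructor|intros; apply ev_tadd; [evp|apply ev_tS; evp]]. Qed.
Definition ttri t := PComp Tri [t].
Lemma ev_ttri X t env a : eval X t env a -> eval X (ttri t) env (tri a).
Proof. intros; eapply ev_C1; eauto; apply ev_Tri. Qed.

Fixpoint cnt (n i : nat) := match i with 0 => 0 | S i' => cnt n i' + nsgn (tri (S i') - n) end.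
Definition Cnt := PRec PZero (tadd (tp 1) (tnsg (tsub (ttri (tS (tp 0))) (tp 2)))).
Lemma ev_Cnt X i n : eval X Cnt [i;n] (cnt n i).
Proof.
  apply (ev_rec X _ _ [n] (cnt n)); [constructor|].
  intros j; apply ev_tadd; [evp|apply ev_tnsg, ev_tsub; [apply ev_ttri, ev_tS; evp|evp]].
Qed.
Definition root n := cnt n n.
Definition troot t := PComp Cnt [t;t].
Lemma ev_troot X t env a : eval X t env a -> eval X (troot t) env (root a).
Proof. intros; eapply ev_C2; eauto; apply ev_Cnt. Qed.
Definition dsnd n := n - tri (root n).
Definition dfst n := root n - dsnd n.
Definition tdsnd t := tsub t (ttri (troot t)).
Definition tdfst t := tsub (troot t) (tdsnd t).
Lemma ev_tdsnd X t env a : eval X t env a -> eval X (tdsnd t) env (dsnd a).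
Proof. intros; apply ev_tsub; auto; apply ev_ttri, ev_troot; auto. Qed.
Lemma ev_tdfst X t env a : eval X t env a -> eval X (tdfst t) env (dfst a).
Proof. intros; apply ev_tsub; [apply ev_troot|apply ev_tdsnd]; auto. Qed.

Definition hd k := dfst (pred k).
Definition tl k := dsnd (pred k).
Definition thd t := tdfst (tpred t).
Definition ttl t := tdsnd (tpred t).
Lemma ev_thd X t env a : eval X t env a -> eval X (thd t) env (hd a).
Proof. intros; apply ev_tdfst, ev_tpred; auto. Qed.
Lemma ev_ttl X t env a : eval X t env a -> eval X (ttl t) env (tl a).
Proof. intros; apply ev_tdsnd, ev_tpred; auto. Qed.
Definition IterTl := PRec (tp 0) (ttl (tp 1)).
Lemma ev_IterTl X i k : eval X IterTl [i;k] (Nat.iter i tl k).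
Proof.
  apply (ev_rec X _ _ [k] (fun i => Nat.iter i tl k)); [evp|].
  intros j; apply ev_ttl; evp.
Qed.
Definition nthc i k := hd (Nat.iter i tl k).
Definition tnth ti tk := thd (PComp IterTl [ti;tk]).
Lemma ev_tnth X ti tk env i k : eval X ti env i -> eval X tk env k -> eval X (tnth ti tk) env (nthc i k).
Proof. intros; apply ev_thd; eapply ev_C2; eauto; apply ev_IterTl. Qed.

Lemma tri2 s : 2 * tri s = s * (s + 1).
Proof. induction s; simpl tri; [reflexivity|]. nia. Qed.

Lemma cpair_tri a b : cpair a b = tri (a + b) + b.
Proof.
  unfold cpair. f_equal. rewrite <- tri2, Nat.mul_comm, Nat.div_mul; lia.
Qed.

Lemma tri_mono a b : a <= b -> tri a <= tri b.
Proof. induction 1; simpl; lia. Qed.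
Lemma tri_ge s : s <= tri s.
Proof. induction s; simpl; lia. Qed.

Lemma cnt_min n s : tri s <= n -> n < tri (S s) -> forall i, cnt n i = Nat.min i s.
Proof.
  intros H1 H2; induction i; [reflexivity|]. simpl cnt. rewrite IHi.
  destruct (le_lt_dec (S i) s).
  - assert (tri (S i) <= n) by (pose proof (tri_mono _ _ l); lia).
    replace (tri i + S i - n) with 0 by (simpl in H; lia). simpl nsgn. lia.
  - assert (tri (S s) <= tri (S i)) by (apply tri_mono; lia).
    replace (tri i + S i - n) with (S (tri (S i) - n - 1)) by (simpl in *; lia). simpl nsgn. lia.
Qed.

Lemma root_spec n s : tri s <= n -> n < tri (S s) -> root n = s.
Proof. intros; unfold root; rewrite (cnt_min n s); auto. pose proof (tri_ge s); lia. Qed.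

Lemma dec_cpair a b : dfst (cpair a b) = a /\ dsnd (cpair a b) = b.
Proof.
  rewrite cpair_tri. assert (root (tri (a+b) + b) = a + b) as R.
  { apply root_spec; simpl; lia. }
  unfold dfst, dsnd; rewrite R; lia.
Qed.

Lemma cpair_next p : cpair (fst (next_pair p)) (snd (next_pair p)) = S (cpair (fst p) (snd p)).
Proof.
  destruct p as [[|a] b]; simpl fst; simpl snd; rewrite !cpair_tri.
  - replace (S b + 0) with (S b) by lia. simpl. lia.
  - replace (a + S b) with (S (a + b)) by lia. simpl. lia.
Qed.

Lemma cpair_unpair n : cpair (fst (unpair n)) (snd (unpair n)) = n.
Proof.
  induction n; [reflexivity|]. unfold unpair; simpl Nat.iter. fold (unpair n).
  rewrite cpair_next, IHn; reflexivity.
Qed.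

Lemma unpair_dec n : unpair n = (dfst n, dsnd n).
Proof.
  rewrite <- (cpair_unpair n) at 2 3. destruct (dec_cpair (fst (unpair n)) (snd (unpair n))) as [A B].
  rewrite A, B. destruct (unpair n); reflexivity.
Qed.

Lemma dsnd_le n : dsnd n <= n.
Proof. unfold dsnd; lia. Qed.

Lemma nthc_lcode : forall l i, nthc i (lcode l) = nth i l 0.
Proof.
  induction l as [|h t IH]; intros i.
  - unfold nthc. assert (forall j, Nat.iter j tl 0 = 0) as E.
    { induction j; simpl; [reflexivity|]. rewrite IHj. reflexivity. }
    rewrite E. destruct i; reflexivity.
  - destruct i.
    + unfold nthc, hd; simpl. apply dec_cpair.
    + unfold nthc. rewrite Nat.iter_succ_r.
      assert (tl (lcode (h :: t)) = lcode t) as E by (unfold tl; simpl; apply dec_cpair).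
      rewrite E. apply IH.
Qed.

Lemma flat_len (h : nat -> nat -> nat) N :
  length (flat_map (fun y => map (fun x => h x y) (seq 0 y)) (seq 0 N)) = tri (pred N).
Proof.
  induction N; [reflexivity|]. rewrite seq_S, flat_map_app, length_app, IHN. simpl.
  rewrite app_nil_r, length_map, length_seq. destruct N; simpl; lia.
Qed.

Lemma map_seq_nth (h : nat -> nat) N x : x < N -> nth x (map h (seq 0 N)) 0 = h x.
Proof.
  intros; rewrite nth_indep with (d' := h 0) by (rewrite length_map, length_seq; lia).
  rewrite map_nth, seq_nth by lia; reflexivity.
Qed.

Lemma flat_nth (h : nat -> nat -> nat) N u v : u < v -> v < N ->
  nth (tri (pred v) + u) (flat_map (fun y => map (fun x => h x y) (seq 0 y)) (seq 0 N)) 0 = h u v.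
Proof.
  intros Huv; induction N; intros HvN; [lia|].
  rewrite seq_S, flat_map_app.
  destruct (Nat.eq_dec v N) as [->|Hne].
  - rewrite app_nth2; rewrite flat_len; [|destruct N; simpl in *; lia].
    replace (tri (pred N) + u - tri (pred N)) with u by lia. simpl. rewrite app_nil_r.
    apply (map_seq_nth (fun x => h x N)); lia.
  - rewrite app_nth1; [apply IHN; lia|]. rewrite flat_len.
    assert (tri v <= tri (pred N)) by (apply tri_mono; lia).
    destruct v; [lia|]. simpl in *. lia.
Qed.


Lemma code_sz q : nthc 0 (code q) = csz q.
Proof. unfold code; rewrite nthc_lcode; reflexivity. Qed.

Lemma code_bit q u v : u < v -> v < csz q ->
  nthc (tri (pred v) + u) (nthc 1 (code q)) = b2n (csig q u v).
Proof.
  intros. unfold code. rewrite nthc_lcode. simpl nth. rewrite nthc_lcode.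
  apply (flat_nth (fun x y => b2n (csig q x y))); auto.
Qed.

Lemma code_lab q x : x < csz q -> dfst (nthc x (nthc 2 (code q))) = b2n (fst (clab q x)).
Proof.
  intros. unfold code. rewrite nthc_lcode. simpl nth. rewrite nthc_lcode.
  rewrite (map_seq_nth (fun x => cpair (b2n (fst (clab q x))) (snd (clab q x)))) by auto.
  apply dec_cpair.
Qed.

Definition lookc (P : nat -> bool) (k x : nat) : nat :=
  let m := Nat.div2 x in let u := dfst m in let v := dsnd m in
  ite (parf x) (S (b2n (P (Nat.div2 x))))
    (ite (ltbn u v) (ite (ltbn v (nthc 0 k)) (S (nthc (tri (pred v) + u) (nthc 1 k))) 0) 1).

Definition Look : prog :=
  let m := tdiv2 (tp 1) in let u := tdfst m in let v := tdsnd m in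
  tite (tpar (tp 1)) (tS (PComp POracle [tdiv2 (tp 1)]))
    (tite (tltb u v) (tite (tltb v (tnth (cst 0) (tp 0))) (tS (tnth (tadd (ttri (tpred v)) u) (tnth (cst 1) (tp 0)))) (cst 0)) (cst 1)).

Lemma ev_Look P k x : eval P Look [k;x] (lookc P k x).
Proof.
  unfold Look, lookc.
  assert (Hm : eval P (tdiv2 (tp 1)) [k;x] (Nat.div2 x)) by (apply ev_tdiv2; evp).
  apply ev_tite; [apply ev_tpar; evp| apply ev_tS; eapply ev_C1; [exact Hm|constructor]|].
  apply ev_tite; [apply ev_tltb; [apply ev_tdfst|apply ev_tdsnd]; exact Hm| |apply ev_cst].
  apply ev_tite; [apply ev_tltb; [apply ev_tdsnd; exact Hm|apply ev_tnth; [apply ev_cst|evp]]| |apply ev_cst].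
  apply ev_tS, ev_tnth; [|apply ev_tnth; [apply ev_cst|evp]].
  apply ev_tadd; [apply ev_ttri, ev_tpred, ev_tdsnd, Hm|apply ev_tdfst, Hm].
Qed.

Definition prodsg (rs : list nat) := fold_right (fun r acc => sgn r * acc) 1 rs.
Definition mustep j s r := ite s s (nsgn r + sgn r * nsgn (pred r) * S (S j)).

Fixpoint sim (O : nat -> nat) (F : nat) (g : prog) (args : list nat) {struct g} : nat :=
  match g with
  | PZero => 1
  | PSucc => match args with [] => 0 | x :: _ => S (S x) end
  | PProj i => if i <? length args then S (nth i args 0) else 0
  | POracle => match args with [] => 0 | x :: _ => O x end
  | PComp f gs => let rs := map (fun g' => sim O F g' args) gs in
                  prodsg rs * sim O F f (map pred rs)
  | PRec f g' => match args with [] => 0 | n :: rest =>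
       iterS (fun i r => sgn r * sim O F g' (i :: pred r :: rest)) (sim O F f rest) n end
  | PMu f => pred (iterS (fun j s => mustep j s (sim O F f (j :: args))) 0 F)
  end.

Definition allposL (ts : list prog) := fold_right (fun t acc => tmul (tsg t) acc) (cst 1) ts.
Definition projs a m := map tp (seq a m).
Definition tmustep tr := tite (tp 1) (tp 1) (tadd (tnsg tr) (tmul (tmul (tsg tr) (tnsg (tpred tr))) (tS (tS (tp 0))))).

Fixpoint T (g : prog) (n : nat) {struct g} : prog :=
  match g with
  | PZero => cst 1
  | PSucc => match n with 0 => PZero | _ => tS (tS (tp 2)) end
  | PProj i => if i <? n then tS (tp (i + 2)) else PZero
  | POracle => match n with 0 => PZero | _ => PComp Look [tp 0; tp 2] end
  | PComp f gs => let ts := map (fun g' => T g' n) gs in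
      tmul (allposL ts) (PComp (T f (length gs)) (tp 0 :: tp 1 :: map tpred ts))
  | PRec f g' => match n with 0 => PZero | S n' =>
      PComp (PRec (T f n') (tmul (tsg (tp 1))
               (PComp (T g' (S (S n'))) ([tp 2; tp 3; tp 0; tpred (tp 1)] ++ projs 4 n'))))
            ([tp 2; tp 0; tp 1] ++ projs 3 n') end
  | PMu f => tpred (PComp (PRec PZero (tmustep (PComp (T f (S n)) ([tp 2; tp 3; tp 0] ++ projs 4 n))))
                         ([tp 1; tp 0; tp 1] ++ projs 2 n))
  end.

Definition prog_ind2 (Pr : prog -> Prop) (h0 : Pr PZero) (hs : Pr PSucc) (hp : forall i, Pr (PProj i))
  (ho : Pr POracle) (hc : forall f gs, Pr f -> Forall Pr gs -> Pr (PComp f gs))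
  (hr : forall f g, Pr f -> Pr g -> Pr (PRec f g)) (hm : forall f, Pr f -> Pr (PMu f)) : forall g, Pr g :=
  fix Fx g := match g with
  | PZero => h0 | PSucc => hs | PProj i => hp i | POracle => ho
  | PComp f gs => hc f gs (Fx f) ((fix G (l : list prog) : Forall Pr l :=
       match l with [] => Forall_nil _ | g' :: l' => Forall_cons _ (Fx g') (G l') end) gs)
  | PRec f g' => hr f g' (Fx f) (Fx g') | PMu f => hm f (Fx f) end.

Lemma evals_app X l1 l2 env v1 v2 : evals X l1 env v1 -> evals X l2 env v2 -> evals X (l1 ++ l2) env (v1 ++ v2).
Proof. induction 1; simpl; auto. intros; constructor; auto. Qed.

Lemma evals_projs X pre args : evals X (projs (length pre) (length args)) (pre ++ args) args.
Proof.
  revert pre; induction args as [|x args IH]; intros pre; [constructor|].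
  unfold projs; simpl. constructor.
  - apply ev_proj; [rewrite length_app; simpl; lia|rewrite app_nth2 by lia; rewrite Nat.sub_diag; reflexivity].
  - specialize (IH (pre ++ [x])). rewrite <- app_assoc in IH. simpl in IH.
    rewrite length_app in IH. simpl in IH. rewrite Nat.add_1_r in IH. exact IH.
Qed.

Lemma evals_projs' X pre args a m : a = length pre -> m = length args ->
  evals X (projs a m) (pre ++ args) args.
Proof. intros -> ->; apply evals_projs. Qed.

Lemma allposL_ok X ts env rs : evals X ts env rs -> eval X (allposL ts) env (prodsg rs).
Proof. induction 1; simpl; [exact (ev_cst _ _ 1)|apply ev_tmul; auto; apply ev_tsg; auto]. Qed.

Lemma preds_ok X ts env rs : evals X ts env rs -> evals X (map tpred ts) env (map pred rs).
Proof. induction 1; simpl; constructor; auto; apply ev_tpred; auto. Qed.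

Lemma Tok P : forall g n k F args, length args = n ->
  eval P (T g n) (k :: F :: args) (sim (lookc P k) F g args).
Proof.
  intros g; induction g using prog_ind2; intros n k F args Hn; subst n; simpl.
  - exact (ev_cst _ _ 1).
  - destruct args; [constructor|]. simpl. apply ev_tS, ev_tS; evp.
  - destruct (i <? length args) eqn:E; [|constructor].
    apply ev_tS. apply Nat.ltb_lt in E. apply ev_proj; simpl; [lia|]. replace (i+2) with (S (S i)) by lia; reflexivity.
  - destruct args; [constructor|]. simpl. eapply ev_C2; [evp|evp|apply ev_Look].
  - assert (Hs : evals P (map (fun g' => T g' (length args)) gs) (k :: F :: args)
                   (map (fun g' => sim (lookc P k) F g' args) gs)).
    { induction H; simpl; constructor; auto. }
    apply ev_tmul; [apply allposL_ok; auto|].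
    eapply eComp; [constructor; [evp|constructor; [evp|apply preds_ok; exact Hs]]|].
    apply IHg. rewrite !length_map; reflexivity.
  - destruct args as [|n rest]; [constructor|]. simpl length.
    eapply eComp.
    { apply (evals_app _ [tp 2; tp 0; tp 1] _ _ [n; k; F] rest); [repeat (apply esCons; [evp|]); apply esNil|].
      apply (evals_projs' _ [k;F;n]); reflexivity. }
    apply (ev_rec _ _ _ (k :: F :: rest)
      (iterS (fun i r => sgn r * sim (lookc P k) F g2 (i :: pred r :: rest)) (sim (lookc P k) F g1 rest))).
    + apply IHg1; reflexivity.
    + intros i. simpl iterS. apply ev_tmul; [apply ev_tsg; evp|].
      eapply eComp; [|apply IHg2; reflexivity].
      apply (evals_app _ [tp 2; tp 3; tp 0; tpred (tp 1)] _ _ [k; F; i; pred _] rest).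
      * constructor; [evp|constructor; [evp|constructor; [evp|constructor; [apply ev_tpred; evp|constructor]]]].
      * apply (evals_projs' _ [i; _; k; F]); reflexivity.
  - apply ev_tpred. eapply eComp.
    { apply (evals_app _ [tp 1; tp 0; tp 1] _ _ [F; k; F] args); [repeat (apply esCons; [evp|]); apply esNil|].
      apply (evals_projs' _ [k;F]); reflexivity. }
    apply (ev_rec _ _ _ (k :: F :: args)
      (iterS (fun j s => mustep j s (sim (lookc P k) F g (j :: args))) 0)); [constructor|].
    intros j. simpl iterS. unfold tmustep, mustep.
    assert (Hr : eval P (PComp (T g (S (length args))) ([tp 2; tp 3; tp 0] ++ projs 4 (length args)))
                   (j :: iterS (fun j s => mustep j s (sim (lookc P k) F g (j :: args))) 0 j :: k :: F :: args)
                   (sim (lookc P k) F g (j :: args))).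
    { eapply eComp; [|apply IHg; reflexivity].
      apply (evals_app _ [tp 2; tp 3; tp 0] _ _ [k; F; j] args); [repeat (apply esCons; [evp|]); apply esNil|].
      apply (evals_projs' _ [j; _; k; F]); reflexivity. }
    apply ev_tite; [evp|evp|].
    apply ev_tadd; [apply ev_tnsg; exact Hr|].
    apply ev_tmul; [apply ev_tmul; [apply ev_tsg, Hr|apply ev_tnsg, ev_tpred, Hr]|apply ev_tS, ev_tS; evp].
Qed.

Lemma eval_det X : forall g args v1 v2, eval X g args v1 -> eval X g args v2 -> v1 = v2.
Proof.
  intros g; induction g using prog_ind2; intros args v1 v2 E1 E2.
  - inversion E1; inversion E2; subst; auto.
  - inversion E1; inversion E2; subst; congruence.
  - inversion E1; inversion E2; subst; auto.
  - inversion E1; inversion E2; subst; congruence.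
  - inversion E1; inversion E2; subst.
    assert (vs = vs0) as ->; [|eapply IHg; eauto].
    clear E1 E2 H5 H11. revert vs vs0 H2 H8. induction H; intros vs vs0 A B.
    + inversion A; inversion B; auto.
    + inversion A; inversion B; subst. f_equal; eauto.
  - assert (forall n rest v1 v2, eval X (PRec g1 g2) (n :: rest) v1 -> eval X (PRec g1 g2) (n :: rest) v2 -> v1 = v2) as K.
    { induction n; intros rest w1 w2 A B; inversion A; inversion B; subst; eauto.
      assert (r = r0) as -> by eauto. eauto. }
    inversion E1; subst; eauto.
  - inversion E1; inversion E2; subst.
    destruct (lt_eq_lt_dec v1 v2) as [[L|L]|L]; auto.
    + destruct (H6 v1 L) as [k Hk]. specialize (IHg _ _ _ H0 Hk). discriminate.
    + destruct (H1 v2 L) as [k Hk]. specialize (IHg _ _ _ H5 Hk). discriminate.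
Qed.

Definition consO (O : nat -> nat) (X : nat -> bool) := forall x, O x <> 0 -> O x = S (b2n (X x)).
Definition agr (O : nat -> nat) (X : nat -> bool) B := forall x, x < B -> O x = S (b2n (X x)).

Lemma mustep_spec j s r : mustep j s r = match s with 0 => match r with 0 => 1 | 1 => S (S j) | _ => 0 end | _ => s end.
Proof. unfold mustep, ite; destruct s; [destruct r as [|[|r]]|]; simpl; lia. Qed.

Definition stf (r : nat -> nat) (j : nat) := iterS (fun j s => mustep j s (r j)) 0 j.

Lemma stf_char r : forall j,
  (stf r j = 0 /\ forall i, i < j -> 2 <= r i) \/
  (stf r j = 1 /\ exists m, m < j /\ r m = 0 /\ forall i, i < m -> 2 <= r i) \/
  (exists m, m < j /\ stf r j = m + 2 /\ r m = 1 /\ forall i, i < m -> 2 <= r i).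
Proof.
  induction j.
  - left; split; [reflexivity|intros; lia].
  - unfold stf; simpl iterS; fold (stf r j). rewrite mustep_spec.
    destruct IHj as [[A B]|[[A B]|[m [A [B C]]]]].
    + rewrite A. destruct (r j) as [|[|rj]] eqn:E.
      * right; left; split; auto. exists j; split; [lia|auto].
      * right; right. exists j; repeat split; auto; lia.
      * left; split; auto. intros i Hi. destruct (Nat.eq_dec i j); [subst; rewrite E; lia|apply B; lia].
    + rewrite A. right; left; split; auto. destruct B as [m [? ?]]; exists m; split; [lia|auto].
    + rewrite B. replace (m + 2) with (S (S m)) by lia. right; right. exists m; repeat split; try lia; tauto.
Qed.

Lemma stf_found r v : r v = 1 -> (forall i, i < v -> 2 <= r i) -> forall j, v < j -> stf r j = v + 2.
Proof.
  intros H1 H2 j Hj. destruct (stf_char r j) as [[A B]|[[A [m [C [D E]]]]|[m [A [B [C D]]]]]].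
  - specialize (B v Hj); lia.
  - destruct (lt_eq_lt_dec m v) as [[L|L]|L]; [specialize (H2 m L); lia|subst; lia|specialize (E v L); lia].
  - destruct (lt_eq_lt_dec m v) as [[L|L]|L]; [specialize (H2 m L); lia|subst; auto|specialize (D v L); lia].
Qed.

Lemma prodsg_pos rs : prodsg rs <> 0 -> prodsg rs = 1 /\ Forall (fun r => r <> 0) rs.
Proof.
  induction rs as [|r rs IH]; simpl; [split; auto|].
  destruct r; simpl; [lia|]. rewrite Nat.add_0_r. intros H. destruct (IH H). split; auto.
Qed.

Lemma prodsg_S vs : prodsg (map S vs) = 1.
Proof. induction vs; simpl; auto. rewrite IHvs; reflexivity. Qed.

Lemma sound O X (HO : consO O X) : forall g F args v, sim O F g args = S v -> eval X g args v.
Proof.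
  intros g; induction g using prog_ind2; intros F args v E; simpl in E.
  - injection E as <-; constructor.
  - destruct args; [discriminate|]. injection E as <-; constructor.
  - destruct (i <? length args) eqn:L; [|discriminate]. injection E as <-. constructor. apply Nat.ltb_lt; auto.
  - destruct args as [|x args]; [discriminate|]. rewrite (HO x) in E by congruence. injection E as <-. constructor.
  - set (rs := map (fun g' => sim O F g' args) gs) in E.
    assert (Pr : prodsg rs <> 0) by (intro Z; rewrite Z in E; discriminate).
    destruct (prodsg_pos rs) as [P1 P2]; [exact Pr|]. rewrite P1 in E. rewrite Nat.mul_1_l in E.
    apply eComp with (vs := map pred rs); [|eapply IHg; eauto].
    subst rs. clear E Pr P1. induction H; simpl; [constructor|]. simpl in P2. apply Forall_cons_iff in P2 as [Hne P2'].
    constructor; [apply (H F); destruct (sim O F x args); [contradiction|reflexivity]|auto].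
  - destruct args as [|n rest]; [discriminate|]. revert v E. induction n; intros v E; simpl in E.
    + constructor; eauto.
    + destruct (iterS _ _ n) as [|r] eqn:I; [discriminate|]. simpl in E. rewrite Nat.add_0_r in E.
      eapply eRecS; [apply IHn; reflexivity|eauto].
  - fold (stf (fun j => sim O F g (j :: args)) F) in E.
    destruct (stf_char (fun j => sim O F g (j :: args)) F) as [[A B]|[[A B]|[m [A [B [C D]]]]]];
      rewrite ?A, ?B in E; try discriminate.
    replace v with m by (simpl in E; lia). constructor; [eauto|].
    intros i Hi. specialize (D i Hi). destruct (sim O F g (i :: args)) as [|[|w]] eqn:Q; try lia.
    exists w; eauto.
Qed.

Lemma agr_mono O X B B' : agr O X B -> B' <= B -> agr O X B'.
Proof. intros H L x Hx; apply H; lia. Qed.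

Lemma collect (Q : nat -> nat -> nat -> Prop)
  (mono : forall a b a' b' m, Q a b m -> a <= a' -> b <= b' -> Q a' b' m) :
  forall n, (forall m, m < n -> exists a b, Q a b m) -> exists a b, forall m, m < n -> Q a b m.
Proof.
  induction n; intros H; [exists 0, 0; intros; lia|].
  destruct IHn as [a [b Hab]]; [intros; apply H; lia|].
  destruct (H n ltac:(lia)) as [a' [b' Q']].
  exists (Nat.max a a'), (Nat.max b b'). intros m Hm.
  destruct (Nat.eq_dec m n) as [->|ne].
  - eapply mono; eauto; lia.
  - eapply mono; [apply Hab; lia|lia|lia].
Qed.

Lemma complete X : forall g args v, eval X g args v ->
  exists F0 B, forall O, agr O X B -> forall F, F0 <= F -> sim O F g args = S v.
Proof.
  intros g; induction g using prog_ind2; intros args v E.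
  - inversion E; subst. exists 0, 0; reflexivity.
  - inversion E; subst. exists 0, 0; reflexivity.
  - inversion E; subst. exists 0, 0; intros O _ F _; simpl. match goal with Hl : i < length args |- _ => apply Nat.ltb_lt in Hl; rewrite Hl end; reflexivity.
  - inversion E; subst. exists 0, (S x). intros O HO F _; simpl. apply HO; lia.
  - inversion E; subst.
    rename H2 into Hs, H5 into Hf.
    assert (exists F0 B, forall O, agr O X B -> forall F, F0 <= F ->
              map (fun g' => sim O F g' args) gs = map S vs) as [F1 [B1 K1]].
    { clear E Hf. revert vs Hs. induction H as [|x l Hx Hl IH]; intros vs Hs; inversion Hs; subst.
      - exists 0, 0; reflexivity.
      - destruct (Hx _ _ H1) as [a [b K]]. destruct (IH _ H4) as [a' [b' K']].
        exists (Nat.max a a'), (Nat.max b b'). intros O HO F HF. simpl.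
        rewrite (K O (agr_mono _ _ _ b HO ltac:(lia)) F ltac:(lia)).
        rewrite (K' O (agr_mono _ _ _ b' HO ltac:(lia)) F ltac:(lia)). reflexivity. }
    destruct (IHg _ _ Hf) as [F2 [B2 K2]].
    exists (Nat.max F1 F2), (Nat.max B1 B2). intros O HO F HF. simpl.
    rewrite (K1 O (agr_mono _ _ _ B1 HO ltac:(lia)) F ltac:(lia)).
    rewrite prodsg_S, map_map. simpl. rewrite map_id, Nat.add_0_r.
    apply K2; [eapply agr_mono; eauto; lia|lia].
  - assert (forall n rest v, eval X (PRec g1 g2) (n :: rest) v ->
       exists F0 B, forall O, agr O X B -> forall F, F0 <= F -> sim O F (PRec g1 g2) (n :: rest) = S v) as K.
    { induction n; intros rest w A; inversion A; subst.
      - destruct (IHg1 _ _ H3) as [a [b K]]. exists a, b; intros; simpl; eauto.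
      - destruct (IHn _ _ H4) as [a [b K]]. destruct (IHg2 _ _ H5) as [a' [b' K']].
        exists (Nat.max a a'), (Nat.max b b'). intros O HO F HF.
        specialize (K O (agr_mono _ _ _ b HO ltac:(lia)) F ltac:(lia)).
        specialize (K' O (agr_mono _ _ _ b' HO ltac:(lia)) F ltac:(lia)).
        simpl in *. rewrite K. simpl. rewrite K'. lia. }
    inversion E; subst; eauto.
  - inversion E; subst. rename v into n.
    destruct (IHg _ _ H0) as [a [b K]].
    destruct (collect (fun a b m => exists k, forall O, agr O X b -> forall F, a <= F -> sim O F g (m :: args) = S (S k)))
      with (n := n) as [a' [b' K']].
    { intros a0 b0 a1 b1 m [k Hk] L1 L2. exists k. intros O HO F HF. apply Hk; [eapply agr_mono; eauto|lia]. }
    { intros m Hm. destruct (H1 m Hm) as [k Hk]. destruct (IHg _ _ Hk) as [a0 [b0 K0]].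
      exists a0, b0, k. auto. }
    exists (Nat.max (S n) (Nat.max a a')), (Nat.max b b'). intros O HO F HF. simpl.
    fold (stf (fun j => sim O F g (j :: args)) F).
    rewrite (stf_found _ n); [simpl; lia| |intros i Hi|lia].
    + apply K; [eapply agr_mono; eauto; lia|lia].
    + destruct (K' i Hi) as [k Hk]. rewrite (Hk O); [lia|eapply agr_mono; eauto; lia|lia].
Qed.

Definition MainP (e0 : prog) : prog :=
  let a := tp 1 in let k := tp 0 in
  let x1 := tdfst a in let x2 := tdfst (tdsnd a) in let tF := tdsnd (tdsnd a) in
  let sz := tnth (cst 0) k in let labs := tnth (cst 2) k in
  let s1 := PComp (T e0 1) [k; tF; tadd x1 x1] in
  let s2 := PComp (T e0 1) [k; tF; tadd x2 x2] in
  tnsg (tmul (tltb x1 sz) (tmul (tltb x2 sz) (tmul (tnsg (teqb x1 x2))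
    (tmul (tnsg (tdfst (tnth x1 labs))) (tmul (teqb (tdfst (tnth x2 labs)) (cst 1))
      (tmul (teqb s1 (cst 2)) (teqb s2 (cst 2)))))))).

Definition Ek (P : nat -> bool) (e0 : prog) (k a : nat) : nat :=
  let x1 := dfst a in let x2 := dfst (dsnd a) in let F := dsnd (dsnd a) in
  let sz := nthc 0 k in let labs := nthc 2 k in
  let s1 := sim (lookc P k) F e0 [x1 + x1] in
  let s2 := sim (lookc P k) F e0 [x2 + x2] in
  nsgn (ltbn x1 sz * (ltbn x2 sz * (nsgn (eqbn x1 x2) *
    (nsgn (dfst (nthc x1 labs)) * (eqbn (dfst (nthc x2 labs)) 1 *
      (eqbn s1 2 * eqbn s2 2)))))).

Lemma ev_Main P e0 k a b d : eval P (MainP e0) [k;a;b;d] (Ek P e0 k a).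
Proof.
  unfold MainP, Ek.
  assert (Ha : eval P (tp 1) [k;a;b;d] a) by evp.
  assert (Hk : eval P (tp 0) [k;a;b;d] k) by evp.
  assert (Hx1 : eval P (tdfst (tp 1)) [k;a;b;d] (dfst a)) by (apply ev_tdfst; auto).
  assert (Hx2 : eval P (tdfst (tdsnd (tp 1))) [k;a;b;d] (dfst (dsnd a))) by (apply ev_tdfst, ev_tdsnd; auto).
  assert (HF : eval P (tdsnd (tdsnd (tp 1))) [k;a;b;d] (dsnd (dsnd a))) by (apply ev_tdsnd, ev_tdsnd; auto).
  assert (Hsz : eval P (tnth (cst 0) (tp 0)) [k;a;b;d] (nthc 0 k)) by (apply ev_tnth; [apply ev_cst|auto]).
  assert (Hl : eval P (tnth (cst 2) (tp 0)) [k;a;b;d] (nthc 2 k)) by (apply ev_tnth; [apply ev_cst|auto]).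
  assert (Hs : forall tx x, eval P tx [k;a;b;d] x ->
     eval P (PComp (T e0 1) [tp 0; tdsnd (tdsnd (tp 1)); tadd tx tx]) [k;a;b;d]
       (sim (lookc P k) (dsnd (dsnd a)) e0 [x + x])).
  { intros tx x Hx. eapply eComp; [|apply Tok; reflexivity].
    apply esCons; [exact Hk|apply esCons; [exact HF|apply esCons; [apply ev_tadd; exact Hx|apply esNil]]]. }
  apply ev_tnsg. apply ev_tmul; [apply ev_tltb; auto|].
  apply ev_tmul; [apply ev_tltb; auto|].
  apply ev_tmul; [apply ev_tnsg, ev_teqb; auto|].
  apply ev_tmul; [apply ev_tnsg, ev_tdfst, ev_tnth; auto|].
  apply ev_tmul; [apply ev_teqb; [apply ev_tdfst, ev_tnth; auto|apply ev_cst]|].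
  apply ev_tmul; apply ev_teqb; auto; apply ev_cst.
Qed.

Lemma nsgn_0 n : nsgn n = 0 <-> n <> 0.
Proof. destruct n; simpl; split; intros; auto; lia. Qed.
Lemma nsgn_n0 n : nsgn n <> 0 <-> n = 0.
Proof. destruct n; simpl; split; intros; auto; lia. Qed.
Lemma mul_n0 a b : a * b <> 0 <-> a <> 0 /\ b <> 0.
Proof. rewrite Nat.mul_eq_0; tauto. Qed.
Lemma ltbn_n0 a b : ltbn a b <> 0 <-> a < b.
Proof. unfold ltbn. destruct (b - a) eqn:E; simpl; split; intros; lia. Qed.
Lemma eqbn_n0 a b : eqbn a b <> 0 <-> a = b.
Proof. unfold eqbn. rewrite mul_n0, !nsgn_n0. lia. Qed.

Lemma eqbn_0 a b : eqbn a b = 0 <-> a <> b.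
Proof. unfold eqbn. rewrite Nat.mul_eq_0. destruct (a - b) eqn:E1, (b - a) eqn:E2; simpl; split; intros; lia. Qed.

Lemma Ek_spec P e0 k a : Ek P e0 k a = 0 <->
  let x1 := dfst a in let x2 := dfst (dsnd a) in let F := dsnd (dsnd a) in
  x1 < nthc 0 k /\ x2 < nthc 0 k /\ x1 <> x2 /\ dfst (nthc x1 (nthc 2 k)) = 0 /\
  dfst (nthc x2 (nthc 2 k)) = 1 /\ sim (lookc P k) F e0 [x1 + x1] = 2 /\
  sim (lookc P k) F e0 [x2 + x2] = 2.
Proof.
  unfold Ek. rewrite nsgn_0, !mul_n0, !ltbn_n0, !nsgn_n0, eqbn_0, !eqbn_n0.
  cbv zeta. tauto.
Qed.

Lemma ltbn_spec a b : ltbn a b = if a <? b then 1 else 0.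
Proof. unfold ltbn. destruct (a <? b) eqn:E; [apply Nat.ltb_lt in E|apply Nat.ltb_ge in E];
  destruct (b - a) eqn:E2; simpl; lia. Qed.
Lemma ite_1 a b : ite 1 a b = a.
Proof. unfold ite; simpl; lia. Qed.
Lemma ite_0 a b : ite 0 a b = b.
Proof. unfold ite; simpl; lia. Qed.

Lemma look_main P f q : (forall u v, u < v -> v < csz q -> f u v = csig q u v) ->
  forall x, lookc P (code q) x =
    if Nat.even x then
      (if dfst (Nat.div2 x) <? dsnd (Nat.div2 x) then
         (if dsnd (Nat.div2 x) <? csz q then S (b2n (join (foracle f) P x)) else 0)
       else S (b2n (join (foracle f) P x)))
    else S (b2n (join (foracle f) P x)).
Proof.
  intros Hf x. unfold lookc, join, foracle. rewrite unpair_dec. cbv zeta.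
  rewrite !ltbn_spec, code_sz.
  destruct (parf_aux x) as [[A [B _]]|[A [B _]]]; rewrite A, B; [rewrite ite_0|rewrite ite_1; reflexivity].
  destruct (dfst (Nat.div2 x) <? dsnd (Nat.div2 x)) eqn:E1; [rewrite ite_1|rewrite ite_0; reflexivity].
  destruct (dsnd (Nat.div2 x) <? csz q) eqn:E2; [rewrite ite_1|rewrite ite_0; reflexivity].
  apply Nat.ltb_lt in E1, E2. rewrite code_bit by auto. rewrite Hf by auto. reflexivity.
Qed.

Lemma look_cons P f q : (forall u v, u < v -> v < csz q -> f u v = csig q u v) ->
  consO (lookc P (code q)) (join (foracle f) P).
Proof.
  intros Hf x Hx. rewrite (look_main P f q Hf x) in *.
  destruct (Nat.even x); auto. destruct (_ <? _); auto. destruct (_ <? _); auto. contradiction.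
Qed.

Lemma look_agr P f q B : (forall u v, u < v -> v < csz q -> f u v = csig q u v) -> B <= csz q ->
  agr (lookc P (code q)) (join (foracle f) P) B.
Proof.
  intros Hf HB x Hx. rewrite (look_main P f q Hf x).
  assert (dsnd (Nat.div2 x) < csz q).
  { pose proof (dsnd_le (Nat.div2 x)). pose proof (Nat.le_div2_diag_l x). lia. }
  apply Nat.ltb_lt in H. rewrite H.
  destruct (Nat.even x); [destruct (dfst _ <? dsnd _)|]; reflexivity.
Qed.

Lemma ext_trans r q p : ext r q -> ext q p -> ext r p.
Proof.
  intros [A1 [B1 C1]] [A2 [B2 C2]]. split; [lia|split].
  - intros x y Hxy Hy. rewrite B1 by lia. auto.
  - intros x Hx. rewrite C1 by lia. auto.
Qed.

Lemma ext_refl p : ext p p.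
Proof. split; [lia|split; auto]. Qed.

Lemma ext_chain (ps : nat -> cond) : (forall s, ext (ps (S s)) (ps s)) ->
  forall s t, s <= t -> ext (ps t) (ps s).
Proof.
  intros Hd s t L. induction L; [apply ext_refl|]. eapply ext_trans; eauto.
Qed.

Theorem lemma4p2 (P : nat -> bool) (ps : nat -> cond) (f : nat -> nat -> bool)
  (Hvalid : forall s, valid (ps s))
  (Hdesc : forall s, ext (ps (S s)) (ps s))
  (Hlim : forall N, exists s, N <= csz (ps s))
  (Hgen : generic3 P ps)
  (Hf : forall s x y, x < y -> y < csz (ps s) -> f x y = csig (ps s) x y) :
  ~ (exists H : nat -> bool, computes (join (foracle f) P) H /\ phomog f H).
Proof.
  intros [H [[e0 He0] [HL [HR [c Hc]]]]].
  set (X := join (foracle f) P) in *.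
  set (W := fun q => exists a, Ek P e0 (code q) a = 0).
  assert (HW : sigma3_in P W).
  { exists (MainP e0). split.
    - intros k a b d. exists (Ek P e0 k a). apply ev_Main.
    - intros p _. split.
      + intros [a Ha]. exists a. intros b. exists 0. eapply ev_eq; [apply ev_Main|exact Ha].
      + intros [a Ha]. exists a. destruct (Ha 0) as [d Hd].
        eapply eval_det; [apply (ev_Main P e0 (code p) a 0 d)|exact Hd]. }
  assert (Hx2 : forall x, eval X e0 [x + x] 1 -> H (2 * x) = true).
  { intros x Ex. specialize (He0 (2 * x)). replace (2 * x) with (x + x) in * by lia.
    pose proof (eval_det _ _ _ _ _ He0 Ex). destruct (H (x + x)); auto; discriminate. }
  assert (Hev : forall x, H (2 * x) = true -> eval X e0 [x + x] 1).
  { intros x Hx. specialize (He0 (2 * x)). rewrite Hx in He0. replace (2 * x) with (x + x) in He0 by lia. exact He0. }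
  destruct (Hgen W HW) as [[s [a Ha]]|[s Hs]].
  - (* the generic meets W: contradiction with homogeneity *)
    set (q := ps s) in *.
    apply Ek_spec in Ha. cbv zeta in Ha.
    set (x1 := dfst a) in *. set (x2 := dfst (dsnd a)) in *. set (F := dsnd (dsnd a)) in *.
    rewrite code_sz in Ha. destruct Ha as [L1 [L2 [N12 [B1 [B2 [S1 S2]]]]]].
    rewrite code_lab in B1, B2 by auto.
    assert (Hq : forall u v, u < v -> v < csz q -> f u v = csig q u v) by (intros; apply Hf; auto).
    pose proof (look_cons P f q Hq) as HC.
    apply (sound _ _ HC) in S1, S2. apply Hx2 in S1, S2.
    set (z1 := snd (clab q x1)) in *. set (z2 := snd (clab q x2)) in *.
    destruct (HR (S (x1 + x2 + z1 + z2))) as [y [Ly Hy]].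
    destruct (Hlim (S y)) as [t Ht].
    set (t' := Nat.max s t).
    assert (E1 : ext (ps t') q) by (apply ext_chain; auto; lia).
    assert (E2 : ext (ps t') (ps t)) by (apply ext_chain; auto; lia).
    assert (Sy : y < csz (ps t')) by (destruct E2; lia).
    assert (Col : forall x, x < csz q -> x < y -> snd (clab q x) < y -> fsym f x y = fst (clab q x)).
    { intros x Hx Hxy Hz. unfold fsym. replace (x <? y) with true by (symmetry; apply Nat.ltb_lt; lia).
      destruct E1 as [_ [_ El]]. rewrite (Hf t') by lia.
      rewrite (Hvalid t') by (try rewrite El; lia). rewrite El by lia. reflexivity. }
    pose proof (Hc x1 y S1 Hy ltac:(lia)) as C1. pose proof (Hc x2 y S2 Hy ltac:(lia)) as C2.
    rewrite Col in C1, C2 by (unfold z1, z2 in *; lia).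
    destruct (fst (clab q x1)), (fst (clab q x2)); simpl in B1, B2; try discriminate; congruence.
  - (* the generic avoids W: build an extension in W *)
    destruct (HL (csz (ps s))) as [x1 [Lx1 Hx1]].
    destruct (HL (S x1)) as [x2 [Lx2 Hx2']].
    destruct (complete _ _ _ _ (Hev _ Hx1)) as [F1 [B1 K1]].
    destruct (complete _ _ _ _ (Hev _ Hx2')) as [F2 [B2 K2]].
    destruct (Hlim (S (B1 + B2 + x2))) as [t Ht].
    set (p' := ps (Nat.max s t)).
    assert (E1 : ext p' (ps s)) by (apply ext_chain; auto; lia).
    assert (E2 : ext p' (ps t)) by (apply ext_chain; auto; lia).
    assert (Sz : S (B1 + B2 + x2) <= csz p') by (destruct E2; lia).
    set (q := mkCond (csz p') (csig p')
                (fun x => if x =? x1 then (false, csz p') else if x =? x2 then (true, csz p') else clab p' x)).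
    assert (Vq : valid q).
    { intros x y Hxy Hy Hz. simpl in *.
      destruct (x =? x1); [simpl in Hz; lia|]. destruct (x =? x2); [simpl in Hz; lia|].
      apply Hvalid; auto. }
    assert (Eq : ext q (ps s)).
    { destruct E1 as [A1 [B1' C1]]. split; [simpl; lia|split].
      - intros; simpl; auto.
      - intros x Hx; simpl. replace (x =? x1) with false by (symmetry; apply Nat.eqb_neq; lia).
        replace (x =? x2) with false by (symmetry; apply Nat.eqb_neq; lia). auto. }
    apply (Hs q Vq Eq). exists (cpair x1 (cpair x2 (Nat.max F1 F2))).
    apply Ek_spec. cbv zeta.
    destruct (dec_cpair x1 (cpair x2 (Nat.max F1 F2))) as [D1 D2]. rewrite D1, D2.
    destruct (dec_cpair x2 (Nat.max F1 F2)) as [D3 D4]. rewrite D3, D4.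
    rewrite code_sz. simpl csz.
    assert (Hq : forall u v, u < v -> v < csz q -> f u v = csig q u v) by (intros; simpl in *; apply (Hf (Nat.max s t)); auto).
    repeat split; try lia.
    + rewrite code_lab by (simpl; lia). simpl. rewrite Nat.eqb_refl. reflexivity.
    + rewrite code_lab by (simpl; lia). simpl.
      replace (x2 =? x1) with false by (symmetry; apply Nat.eqb_neq; lia). rewrite Nat.eqb_refl. reflexivity.
    + apply K1; [apply look_agr; auto; simpl; lia|lia].
    + apply K2; [apply look_agr; auto; simpl; lia|lia].
Qed.
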